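(* Let $\lambda\in(0,1]$, $S^{\min}\le S^{\max}$, $U^{\min}\le 0\le U^{\max}$ and real numbers $\underline{D}g<\overline{D}g$ be given, with $W^{\max},\Gamma^{\min}(W),\Gamma^{\max}(W)$, $M(\Gamma)$ as in the context. Consider the parameter optimization problem \[ \textbf{(PO)}\quad \text{minimize } M(\Gamma)/W \quad\text{subject to } \Gamma^{\min}(W)\le\Gamma\le\Gamma^{\max}(W),\ 0<W\le W^{\max}, \] over $(\Gamma,W)$, and the semidefinite program \[ \text{minimize } N^{u}+\lambda(1-\lambda)N^{s} \] over $(\Gamma,W,N^u,N^s)$ subject to $\Gamma^{\min}(W)\le\Gamma\le\Gamma^{\max}(W)$, $0<W\le W^{\max}$, and \[ \begin{bmatrix} N^u & U^{\min}+(1-\lambda)\Gamma\\ U^{\min}+(1-\lambda)\Gamma & 2W\end{bmatrix}\succeq0,\quad \begin{bmatrix} N^u & U^{\max}+(1-\lambda)\Gamma\\ U^{\max}+(1-\lambda)\Gamma & 2W\end{bmatrix}\succeq0, \] \[ \begin{bmatrix} N^s & S^{\min}+\Gamma\\ S^{\min}+\Gamma & W\end{bmatrix}\succeq0,\quad \begin{bmatrix} N^s & S^{\max}+\Gamma\\ S^{\max}+\Gamma & W\end{bmatrix}\succeq0. \] Then \textbf{(PO)} can be solved via this semidefinite program: the two problems have the same optimal value, and $(\Gamma,W)$ is optimal for \textbf{(PO)} if and only if there exist $N^u,N^s$ such that $(\Gamma,W,N^u,N^s)$ is optimal for the semidefinite program.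
   Context: Definitions: $W^{\max}=\dfrac{(S^{\max}-S^{\min})-(U^{\max}-U^{\min})}{\overline{D}g-\underline{D}g}$; $\Gamma^{\min}(W)=\frac1\lambda\big(-W\underline{D}g+U^{\max}-S^{\max}\big)$ and $\Gamma^{\max}(W)=\frac1\lambda\big(-W\overline{D}g-S^{\min}+U^{\min}\big)$ (affine in $W$); $M(\Gamma)=M^u(\Gamma)+\lambda(1-\lambda)M^s(\Gamma)$ with $M^{u}(\Gamma)=\tfrac12\max\big((U^{\min}+(1-\lambda)\Gamma)^2,(U^{\max}+(1-\lambda)\Gamma)^2\big)$ and $M^{s}(\Gamma)=\max\big((S^{\min}+\Gamma)^2,(S^{\max}+\Gamma)^2\big)$. In the paper, $M(\Gamma)/W$ is the sub-optimality bound of an online storage control algorithm with shift parameter $\Gamma$ and weight parameter $W$. *)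

(* Defs.v *)
From HB Require Import structures.
From mathcomp Require Import all_boot all_order all_algebra.
From mathcomp Require Import all_classical all_reals ereal.
Set Implicit Arguments. Unset Strict Implicit. Unset Printing Implicit Defensive.
Import Order.TTheory GRing.Theory Num.Theory.
Local Open Scope ring_scope.
Local Open Scope classical_set_scope.

Section Defs.
Variable R : realType.
Variables (lam Smin Smax Umin Umax Dl Du : R).
(* Dl = \underline{D}g, Du = \overline{D}g *)

Definition Wmax : R := ((Smax - Smin) - (Umax - Umin)) / (Du - Dl).
Definition Gmin (W : R) : R := (- (W * Dl) + Umax - Smax) / lam.
Definition Gmax (W : R) : R := (- (W * Du) - Smin + Umin) / lam.

Definition Mu (G : R) : R :=
  (Num.max ((Umin + (1 - lam) * G) ^+ 2) ((Umax + (1 - lam) * G) ^+ 2)) / 2.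
Definition Ms (G : R) : R := Num.max ((Smin + G) ^+ 2) ((Smax + G) ^+ 2).
Definition Mbound (G : R) : R := Mu G + lam * (1 - lam) * Ms G.

Definition mx2 (a b d : R) : 'M[R]_2 :=
  \matrix_(i < 2, j < 2)
    if (i == 0 :> nat) then (if (j == 0 :> nat) then a else b)
    else (if (j == 0 :> nat) then b else d).

Definition psd (A : 'M[R]_2) : Prop :=
  A^T = A /\ forall x : 'cV[R]_2, 0 <= (x^T *m A *m x) 0 0.

Definition po_feasible (G W : R) : Prop :=
  Gmin W <= G <= Gmax W /\ 0 < W <= Wmax.

Definition po_obj (G W : R) : R := Mbound G / W.

Definition po_value : \bar R :=
  ereal_inf [set x | exists G W, po_feasible G W /\ x = (po_obj G W)%:E].

Definition po_optimal (G W : R) : Prop :=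
  po_feasible G W /\ forall G' W', po_feasible G' W' -> po_obj G W <= po_obj G' W'.

Definition sdp_feasible (G W Nu Ns : R) : Prop :=
  [/\ Gmin W <= G <= Gmax W /\ 0 < W <= Wmax,
      psd (mx2 Nu (Umin + (1 - lam) * G) (2 * W)),
      psd (mx2 Nu (Umax + (1 - lam) * G) (2 * W)),
      psd (mx2 Ns (Smin + G) W) &
      psd (mx2 Ns (Smax + G) W)].

Definition sdp_obj (Nu Ns : R) : R := Nu + lam * (1 - lam) * Ns.

Definition sdp_value : \bar R :=
  ereal_inf [set x | exists G W Nu Ns, sdp_feasible G W Nu Ns /\ x = (sdp_obj Nu Ns)%:E].

Definition sdp_optimal (G W Nu Ns : R) : Prop :=
  sdp_feasible G W Nu Ns /\
  forall G' W' Nu' Ns', sdp_feasible G' W' Nu' Ns' -> sdp_obj Nu Ns <= sdp_obj Nu' Ns'.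
End Defs.

(* Main.v *)
Require Import Defs.
From HB Require Import structures.
From mathcomp Require Import all_boot all_order all_algebra.
From mathcomp Require Import all_classical all_reals ereal.
From mathcomp Require Import ring lra.
Import Order.TTheory GRing.Theory Num.Theory.
Local Open Scope ring_scope.

Lemma qform (R : realType) (a b d : R) (x : 'cV[R]_2) :
  (x^T *m mx2 a b d *m x) 0 0 =
  a * (x 0 0)^+2 + 2 * b * (x 0 0) * (x 1 0) + d * (x 1 0)^+2.
Proof.
rewrite !mxE !big_ord_recl !big_ord0 !mxE !big_ord_recl !big_ord0 !mxE /=.
rewrite /bump /=. rewrite ?mxE /=.
have -> : (lift ord0 ord0 : 'I_2) = 1 by apply/val_inj.
ring.
Qed.

Lemma psdP (R : realType) (N b c : R) : 0 < c ->
  psd (mx2 N b c) <-> b ^+ 2 <= N * c.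
Proof.
move=> c0; split.
- move=> [_ H]; have := H (\col_i (if i == 0 :> nat then c else - b)).
  rewrite qform !mxE /= => Hq.
  have : 0 <= c * (N * c - b ^+ 2) by move: Hq; nra.
  by rewrite pmulr_rge0 // subr_ge0.
- move=> Hb; split.
    by apply/matrixP => i j; rewrite !mxE; case: i => [[|[|i]] ?]; case: j => [[|[|j]] ?].
  move=> x; rewrite qform.
  set u := x 0 0; set v := x 1 0.
  have E : c * (N * u ^+ 2 + 2 * b * u * v + c * v ^+ 2) =
           (c * v + b * u) ^+ 2 + (N * c - b ^+ 2) * u ^+ 2 by ring.
  have : 0 <= c * (N * u ^+ 2 + 2 * b * u * v + c * v ^+ 2).
    rewrite E addr_ge0 ?sqr_ge0 // mulr_ge0 ?sqr_ge0 // subr_ge0 //.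
  by rewrite pmulr_rge0.
Qed.

Lemma sdp_feasP (R : realType) (lam Smin Smax Umin Umax Dl Du G W Nu Ns : R) :
  sdp_feasible lam Smin Smax Umin Umax Dl Du G W Nu Ns <->
  po_feasible lam Smin Smax Umin Umax Dl Du G W /\
  Mu lam Umin Umax G / W <= Nu /\ Ms Smin Smax G / W <= Ns.
Proof.
split.
- case=> [[HG /andP [W0 HW]] P1 P2 P3 P4].
  have W20 : 0 < 2 * W by rewrite mulr_gt0.
  move/(psdP _ _ _ _ W20): P1 => P1; move/(psdP _ _ _ _ W20): P2 => P2.
  move/(psdP _ _ _ _ W0): P3 => P3; move/(psdP _ _ _ _ W0): P4 => P4.
  split; first by split => //; apply/andP.
  rewrite !ler_pdivrMr // /Mu /Ms !ge_max.
  have -> : Nu * W * 2 = Nu * (2 * W) by ring.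
  by rewrite P1 P2 P3 P4.
- case=> [[HG /andP [W0 HW]] []].
  have W20 : 0 < 2 * W by rewrite mulr_gt0.
  rewrite !ler_pdivrMr // /Mu /Ms !ge_max.
  have -> : Nu * W * 2 = Nu * (2 * W) by ring.
  move=> /andP [P1 P2] /andP [P3 P4].
  split; first by split => //; apply/andP.
  + by apply/psdP.
  + by apply/psdP.
  + by apply/psdP.
  + by apply/psdP.
Qed.

Theorem lemma1 (R : realType) (lam Smin Smax Umin Umax Dl Du : R) :
  0 < lam <= 1 -> Smin <= Smax -> Umin <= 0 <= Umax -> Dl < Du ->
  po_value lam Smin Smax Umin Umax Dl Du = sdp_value lam Smin Smax Umin Umax Dl Du /\
  (forall G W : R,
     po_optimal lam Smin Smax Umin Umax Dl Du G W <->
     exists Nu Ns : R, sdp_optimal lam Smin Smax Umin Umax Dl Du G W Nu Ns).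
Proof.
move=> /andP [l0 l1] _ _ _.
have c0 : 0 <= lam * (1 - lam) by apply: mulr_ge0; [exact: ltW | rewrite subr_ge0].
have dom : forall G W Nu Ns, sdp_feasible lam Smin Smax Umin Umax Dl Du G W Nu Ns ->
    po_obj lam Smin Smax Umin Umax G W <= sdp_obj lam Nu Ns.
  move=> G W Nu Ns /sdp_feasP [_ [H1 H2]].
  rewrite /po_obj /sdp_obj /Mbound mulrDl -mulrA.
  by apply: lerD => //; apply: ler_wpM2l.
have wit : forall G W, po_feasible lam Smin Smax Umin Umax Dl Du G W ->
    sdp_feasible lam Smin Smax Umin Umax Dl Du G W
      (Mu lam Umin Umax G / W) (Ms Smin Smax G / W) /\
    sdp_obj lam (Mu lam Umin Umax G / W) (Ms Smin Smax G / W) =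
      po_obj lam Smin Smax Umin Umax G W.
  move=> G W HF; split; first by apply/sdp_feasP; split...
  by rewrite /po_obj /sdp_obj /Mbound; ring.
split.
- apply/le_anti/andP; split.
  + apply/ereal_infP => y [G [W [Nu [Ns [HF ->]]]]].
    apply: ge_ereal_inf; exists (po_obj lam Smin Smax Umin Umax G W)%:E.
      exists G, W; split => //; by case/sdp_feasP: HF.
    by rewrite lee_fin; apply: dom.
  + apply/ereal_infP => y [G [W [HF ->]]].
    apply: ge_ereal_inf; exists (po_obj lam Smin Smax Umin Umax G W)%:E => //.
    have [HS HE] := wit _ _ HF.
    by exists G, W, (Mu lam Umin Umax G / W), (Ms Smin Smax G / W); rewrite HE.
- move=> G W; split.
  + move=> [HF Hopt]; have [HS HE] := wit _ _ HF.
    exists (Mu lam Umin Umax G / W), (Ms Smin Smax G / W); split => //.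
    move=> G' W' Nu' Ns' HF'; rewrite HE.
    apply: le_trans (dom _ _ _ _ HF'); apply: Hopt.
    by case/sdp_feasP: HF'.
  + move=> [Nu [Ns [HF Hopt]]]; split; first by case/sdp_feasP: HF.
    move=> G' W' HF'; have [HS HE] := wit _ _ HF'.
    rewrite -HE; apply: le_trans (Hopt _ _ _ _ HS); exact: dom.
Qed.
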